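(* Let $k,\ell \geq 0$ be integers and let $F$ be a field of characteristic zero. For $n \ge 0$ let $H_n(k,\ell)$ be the set of partitions $\lambda=(\lambda_1,\dots,\lambda_m)$ of $n$ such that $\lambda_{k+i} \le \ell$ for all $i=1,\dots,m-k$ (i.e. partitions whose Young diagram fits inside the $(k,\ell)$-hook). For a partition $\lambda$, define the hook Schur function $$HS_\lambda(x_1,\dots,x_k;y_1,\dots,y_\ell) = \sum_{\mu \subseteq \lambda} s_\mu(x_1,\dots,x_k)\, s_{\lambda'/\mu'}(y_1,\dots,y_\ell),$$ where $s_\nu$ denotes the (skew) Schur polynomial and $\lambda'/\mu'$ is the conjugate of the skew shape $\lambda/\mu$. Let $\Lambda_n^{(k,\ell)} = \mathrm{span}_F\{HS_\lambda(x_1,\dots,x_k;y_1,\dots,y_\ell) : \lambda \in H_n(k,\ell)\}$ and $\Lambda^{(k,\ell)} = \bigoplus_{n \ge 0} \Lambda_n^{(k,\ell)}$. Let $G_{k,\ell}(t) = \sum_{n\ge 0} |H_n(k,\ell)|\, t^n$ be the generating function of partitions fitting in the $(k,\ell)$-hook, which equals the Hilbert series $\sum_{n \ge 0} \dim_F \Lambda_n^{(k,\ell)}\, t^n$ of $\Lambda^{(k,\ell)}$. Then $$G_{k,\ell}(t) = A^{k,\ell}(t) \prod_{i=1}^{k+\ell} \frac{1}{1-t^i},$$ where $$A^{k,\ell}(t) = 1 + \sum_{i=1}^{\ell} t^{i(k+\ell+1)} \begin{bmatrix} k \\ i \end{bmatrix}_t \sum_{j=0}^{\ell-i} t^{j(k-i+1)}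 \begin{bmatrix} i+j-1 \\ j \end{bmatrix}_t .$$
   Context: For integers $a,b$, the $t$-binomial coefficient is $\begin{bmatrix} a \\ b \end{bmatrix}_t = \frac{(t;t)_a}{(t;t)_b (t;t)_{a-b}}$ when $0 \le b \le a$ and $0$ otherwise, where $(x;t)_n = (1-x)(1-xt)\cdots(1-xt^{n-1})$ and $(x;t)_0=1$. Equivalently, $A^{k,\ell}(t)$ is determined by $A^{k,0}(t)=1$ and $A^{k,\ell}(t) = (1-t^{k+\ell})A^{k,\ell-1}(t) + t^{\ell(k+1)}\begin{bmatrix} k+\ell \\ \ell \end{bmatrix}_t$ for $\ell\ge1$. The hook Schur functions $HS_\lambda$ with $\lambda\in H_n(k,\ell)$ are linearly independent (Berele–Regev), so $\dim_F\Lambda_n^{(k,\ell)} = |H_n(k,\ell)|$. *)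

(* Defs.v *)
From mathcomp Require Import all_boot all_order all_algebra.
Set Implicit Arguments. Unset Strict Implicit. Unset Printing Implicit Defensive.
Import GRing.Theory.
Local Open Scope ring_scope.

(* A partition of n is encoded as a nonincreasing n-tuple of naturals (each
   <= n), padded with zeros, summing to n.  Partitions of n have at most n
   nonzero parts, so this is a bijection with the partitions of n.
   The (k,l)-hook condition lambda_{k+i} <= l (i >= 1, 1-indexed) is that all
   entries from 0-based index k on are <= l (padding zeros satisfy it). *)
Definition parts_of {n : nat} (t : n.-tuple 'I_n.+1) : seq nat :=
  [seq nat_of_ord i | i <- t].

Definition in_hook (k l : nat) {n : nat} (t : n.-tuple 'I_n.+1) : bool :=
  [&& sorted geq (parts_of t), sumn (parts_of t) == n
    & all (fun x => x <= l)%N (drop k (parts_of t))].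

Definition H_card (k l n : nat) : nat := #|[set t : n.-tuple 'I_n.+1 | in_hook k l t]|.

Definition G_trunc (k l n : nat) : {poly rat} :=
  \sum_(0 <= m < n.+1) (H_card k l m)%:R *: 'X^m.

Definition qpoch (a : nat) : {poly rat} := \prod_(1 <= i < a.+1) (1 - 'X^i).

Definition qbinom (a b : nat) : {poly rat} :=
  if (b <= a)%N then qpoch a %/ (qpoch b * qpoch (a - b)) else 0.

Definition Apoly (k l : nat) : {poly rat} :=
  1 + \sum_(1 <= i < l.+1)
        ('X^(i * (k + l + 1)) * qbinom k i *
          \sum_(0 <= j < (l - i).+1) ('X^(j * (k - i + 1)) * qbinom (i + j - 1) j)).

(* Main.v *)
Require Import Defs.
From mathcomp Require Import all_boot all_order all_algebra.
From mathcomp Require Import ring zify.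
Set Implicit Arguments. Unset Strict Implicit. Unset Printing Implicit Defensive.
Import GRing.Theory.
Local Open Scope ring_scope.

Fixpoint gb (N r : nat) : {poly rat} :=
  match N, r with
  | _, 0 => 1
  | 0, _.+1 => 0
  | N'.+1, r'.+1 => gb N' r' + 'X^(r'.+1) * gb N' r'.+1
  end.

Lemma gb0 N : gb N 0 = 1. Proof. by case: N. Qed.
Lemma gbS N r : gb N.+1 r.+1 = gb N r + 'X^(r.+1) * gb N r.+1. Proof. by []. Qed.

Lemma gb_small N r : (N < r)%N -> gb N r = 0.
Proof.
elim: N r => [|N IH] [|r] //= H.
by rewrite !IH ?mulr0 ?addr0 // ltnW.
Qed.

Lemma gbNN N : gb N N = 1.
Proof. by elim: N => //= N ->; rewrite gb_small // mulr0 addr0. Qed.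

Lemma qpochS n : qpoch n.+1 = qpoch n * (1 - 'X^(n.+1)).
Proof. by rewrite /qpoch big_nat_recr. Qed.

Lemma qpoch0 : qpoch 0 = 1.
Proof. by rewrite /qpoch big_geq. Qed.

Lemma qpoch_neq0 n : qpoch n != 0.
Proof.
elim: n => [|n IH]; first by rewrite qpoch0 oner_neq0.
rewrite qpochS mulf_neq0 //.
apply/eqP => /(congr1 (fun p : {poly rat} => p`_0)).
rewrite coefB coef1 coefXn /= subr0 coef0 => /eqP; by rewrite oner_eq0.
Qed.

Lemma gb_qpoch N r : (r <= N)%N -> gb N r * qpoch r * qpoch (N - r) = qpoch N.
Proof.
elim: N r => [|N IH] [|r] //=.
- by rewrite !qpoch0 !mulr1.
- by rewrite subn0 qpoch0 mul1r mul1r.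
rewrite ltnS => Hr.
rewrite subSS mulrDl mulrDl.
have E1 : gb N r * qpoch r.+1 * qpoch (N - r) = qpoch N * (1 - 'X^(r.+1)).
  by rewrite qpochS -(IH r Hr); ring.
case: (ltngtP r N) Hr => // [Hlt|->] _.
- have E2 : qpoch (N - r) = qpoch (N - r.+1) * (1 - 'X^(N - r)).
    by rewrite -[in LHS](subnSK Hlt) qpochS subnSK.
  have E3 : 'X^(r.+1) * gb N r.+1 * qpoch r.+1 * qpoch (N - r)
      = 'X^(r.+1) * qpoch N * (1 - 'X^(N - r)).
    by rewrite E2 -(IH _ Hlt); ring.
  have EX : 'X^(r.+1) * 'X^(N - r) = 'X^(N.+1) :> {poly rat}.
    by rewrite -exprD addSn subnKC // ltnW.
  by rewrite E1 E3 qpochS -EX; ring.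
- by rewrite (gb_small (ltnSn N)) mulr0 !mul0r addr0 subnn qpoch0 mulr1 qpochS gbNN mul1r.
Qed.

Lemma qbinomE N r : qbinom N r = gb N r.
Proof.
rewrite /qbinom; case: ifP => H; last by rewrite gb_small // ltnNge H.
by rewrite -(gb_qpoch H) -mulrA mulpK // mulf_neq0 // qpoch_neq0.
Qed.

Lemma gb_down k i : (0 < i)%N -> (i <= k.+1)%N ->
  (1 - 'X^i) * gb k i = (1 - 'X^(k.+1 - i)) * gb k i.-1.
Proof.
case: i => // i _; rewrite ltnS => Hi /=.
case: (ltngtP i k) Hi => // [Hlt|->] _; last by rewrite (gb_small (ltnSn k)) mulr0 subnn expr0 subrr mul0r.
apply: (@mulIf _ (qpoch i * qpoch (k - i.+1))); first by rewrite mulf_neq0 // qpoch_neq0.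
have H1 := gb_qpoch (ltnW Hlt).
have H2 := gb_qpoch Hlt.
have -> : (1 - 'X^(i.+1)) * gb k i.+1 * (qpoch i * qpoch (k - i.+1))
   = gb k i.+1 * qpoch i.+1 * qpoch (k - i.+1).
  by rewrite qpochS; ring.
rewrite H2 -H1.
have -> : qpoch (k - i) = qpoch (k - i.+1) * (1 - 'X^(k.+1 - i.+1)).
  by rewrite subSS -[in LHS](subnSK Hlt) qpochS subnSK.
rewrite /=; ring.
Qed.

Lemma vandermonde m n r :
  gb (m + n) r = \sum_(i < r.+1) 'X^(i * (n + i - r)) * gb m i * gb n (r - i).
Proof.
elim: n r => [|n IH] r.
  rewrite big_ord_recr subnn gb0 mulr1 muln0 expr0 mul1r addn0.
  rewrite big1; first by rewrite /= add0r. move=> i _.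
  by rewrite (@gb_small 0 (r - i)) ?mulr0 // subn_gt0.
rewrite addnS; case: r => [|r].
  by rewrite big_ord1 /= !gb0 mul0n expr0 !mulr1.
rewrite gbS !IH [in RHS]big_ord_recr subnn gb0 mulr1.
rewrite [X in _ + 'X^_ * X = _]big_ord_recr subnn gb0 mulr1.
rewrite mulrDr addrA; congr (_ + _); last first.
  rewrite mulrA -exprD; congr ('X^_ * _) => /=; lia.
rewrite mulr_sumr -big_split /=; apply: eq_bigr => [[i /= Hi]] _.
rewrite subSn // mulrDr; congr (_ + _).
case: (leqP r.+1 (n + i)) => H.
  have E : 'X^(r.+1) * 'X^(i * (n + i - r.+1)) = 'X^(i * (n.+1 + i - r.+1)) * 'X^((r - i).+1) :> {poly rat}.
    rewrite -!exprD; congr ('X^_).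
    rewrite addSn subSS.
    have -> : (n + i - r = (n + i - r.+1).+1)%N by lia.
    rewrite mulnS; lia.
  transitivity (('X^(r.+1) * 'X^(i * (n + i - r.+1))) * gb m i * gb n (r - i).+1); first ring.
  rewrite E; ring.
rewrite (@gb_small n (r - i).+1) ?mulr0 //; lia.
Qed.

Definition ta (k L i j : nat) : {poly rat} :=
  'X^(i * (k + L + 1)) * gb k i * ('X^(j * (k - i + 1)) * gb (i + j - 1) j).
Definition tw (k L i j : nat) : {poly rat} :=
  'X^(i * (k + L) + j * (k.+1 - i)) * gb k i.-1 * gb (i + j - 1) j.

Lemma ta_alt k L i j : (i <= k.+1)%N ->
  ta k L i j = 'X^(i * (k + L + 1) + j * (k.+1 - i)) * gb k i * gb (i + j - 1) j.
Proof.
move=> H; rewrite /ta; case: (ltngtP i k.+1) H => // [Hlt|->] _.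
  rewrite exprD; have -> : (k - i + 1 = k.+1 - i)%N by lia.
  ring.
by rewrite (gb_small (ltnSn k)) !mulr0 !mul0r.
Qed.

Lemma L1 k l i j :
  ta k l.+1 i.+1 j - ta k l i.+1 j + 'X^(k + l.+1) * ta k l i j.+1
  = tw k l.+1 i.+1 j.+1 - tw k l.+1 i.+1 j.
Proof.
case: (leqP i k) => Hik; last first.
  have h1 : (k < i.+1)%N by apply: ltnW.
  rewrite /ta /tw /= (gb_small h1) (gb_small Hik).
  by rewrite !(mulr0, mul0r, subrr, addr0).
have [s Hs] : exists s, k = (i + s)%N by exists (k - i)%N; lia.
subst k.
have Hle : (i.+1 <= (i + s).+1)%N by lia.
have D := @gb_down (i + s) i.+1 erefl Hle.
move: D; have -> : ((i + s).+1 - i.+1 = s)%N by lia.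
rewrite /= => D.
rewrite !ta_alt ?ltnS ?leq_addr ?leqW ?leq_addr //.
rewrite /tw /=.
have -> : ((i + s).+1 - i.+1 = s)%N by lia.
have -> : ((i + s).+1 - i = s.+1)%N by lia.
have -> : (i + j.+1 - 1 = i + j)%N by lia.
have -> : (i.+1 + j - 1 = i + j)%N by lia.
have -> : (i.+1 + j.+1 - 1 = (i + j).+1)%N by lia.
rewrite gbS.
set E := (i.+1 * (i + s + l.+1) + j * s)%N.
have e1 : 'X^(i.+1 * (i + s + l.+1 + 1) + j * s) = 'X^E * 'X^(i.+1) :> {poly rat}.
  by rewrite -!exprD; congr 'X^_; rewrite /E; nia.
have e2 : 'X^(i.+1 * (i + s + l + 1) + j * s) = 'X^E :> {poly rat}.
  by congr 'X^_; rewrite /E; nia.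
have e3 : 'X^(i + s + l.+1) * 'X^(i * (i + s + l + 1) + j.+1 * s.+1)
   = 'X^E * 'X^s * 'X^(j.+1) :> {poly rat}.
  by rewrite -!exprD; congr 'X^_; rewrite /E; nia.
have e4 : 'X^(i.+1 * (i + s + l.+1) + j.+1 * s) = 'X^E * 'X^s :> {poly rat}.
  by rewrite -!exprD; congr 'X^_; rewrite /E; nia.
have -> : 'X^(i + s + l.+1) * ('X^(i * (i + s + l + 1) + j.+1 * s.+1) * gb (i + s) i * gb (i + j) j.+1)
  = ('X^(i + s + l.+1) * 'X^(i * (i + s + l + 1) + j.+1 * s.+1)) * gb (i + s) i * gb (i + j) j.+1 by ring.
rewrite e1 e2 e3 e4.
apply/eqP; rewrite -subr_eq0; apply/eqP.
transitivity ('X^E * gb (i + j) j * ((1 - 'X^s) * gb (i + s) i - (1 - 'X^(i.+1)) * gb (i + s) i.+1)); first ring.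
by rewrite D subrr mulr0.
Qed.

Definition Rr k L i := \sum_(0 <= j < L.+1 - i) ta k L i j.

Lemma L2 k l i : (i <= l)%N ->
  Rr k l.+1 i.+1 - Rr k l i.+1 + 'X^(k + l.+1) * Rr k l i
  = ta k l.+1 i.+1 (l - i) + tw k l.+1 i.+1 (l - i).
Proof.
move=> Hil; rewrite /Rr !subSS subSn //.
rewrite big_nat_recr //= [in X in _ + _ * X]big_nat_recl //.
rewrite mulrDr.
have E0 : 'X^(k + l.+1) * ta k l i 0 = tw k l.+1 i.+1 0.
  rewrite /ta /tw /= !mul0n !expr0 !mul1r addn0 gb0 mulr1.
  rewrite gb0 mulr1 addn0 mulrA -exprD; congr ('X^_ * _); lia.
rewrite E0.
have T := @telescope_sumr _ 0 (l - i) (tw k l.+1 i.+1) (leq0n _).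
have S : \sum_(0 <= j < l - i) ta k l.+1 i.+1 j - \sum_(0 <= j < l - i) ta k l i.+1 j
   + 'X^(k + l.+1) * \sum_(0 <= j < l - i) ta k l i j.+1
   = \sum_(0 <= j < l - i) (tw k l.+1 i.+1 j.+1 - tw k l.+1 i.+1 j).
  rewrite mulr_sumr -sumrB -big_split /=.
  by apply: eq_bigr => j _; rewrite L1.
rewrite T in S.
move: S.
set A := \sum_(0 <= j < l - i) ta k l.+1 i.+1 j.
set B := \sum_(0 <= j < l - i) ta k l i.+1 j.
set C := \sum_(0 <= j < l - i) ta k l i j.+1.
move=> S.
have -> : A = tw k l.+1 i.+1 (l - i) - tw k l.+1 i.+1 0 + B - 'X^(k + l.+1) * C.
  by rewrite -S; ring.
ring.
Qed.

Lemma ApolyE k l : Apoly k l = 1 + \sum_(0 <= i < l) Rr k l i.+1.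
Proof.
rewrite /Apoly big_add1 /=; congr (_ + _).
apply: eq_big_nat => i /andP [_ Hi].
rewrite !qbinomE mulr_sumr /Rr subSS.
have -> : (l - i.+1).+1 = (l - i)%N by lia.
by apply: eq_bigr => j _; rewrite qbinomE.
Qed.

Lemma Rr_last k l : Rr k l l.+1 = 0.
Proof. by rewrite /Rr subnn big_geq. Qed.

Lemma Rr0 k l : Rr k l 0 = 1.
Proof.
rewrite /Rr subn0 big_nat_recl // big1 ?addr0.
  by rewrite /ta !mul0n !expr0 gb0 !mul1r.
move=> j _; rewrite /ta; have -> : (0 + j.+1 - 1 = j)%N by lia.
by rewrite (gb_small (ltnSn j)) !mulr0.
Qed.

Lemma Vfin k l : \sum_(0 <= i < l.+1) (ta k l.+1 i.+1 (l - i) + tw k l.+1 i.+1 (l - i))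
  = 'X^(l.+1 * k.+1) * gb (k + l.+1) l.+1.
Proof.
rewrite addnS -addSn vandermonde big_ord_recl /=.
rewrite gb_small ?mulr0 ?add0r // mulr_sumr big_mkord.
apply: eq_bigr => [[i /= Hi]] _.
rewrite /bump /= ?add0n ?add1n.
case: (leqP i k) => Hik; last first.
  have h1 : (k < i.+1)%N by lia.
  rewrite /ta /tw /= (gb_small h1) (gb_small Hik).
  by rewrite !(mulr0, mul0r, addr0).
rewrite ta_alt ?ltnS // /tw /=.
have -> : (i.+1 + (l - i) - 1 = l)%N by lia.
have -> : (l.+1 - i.+1 = l - i)%N by lia.
have e1 : 'X^(i.+1 * (k + l.+1 + 1) + (l - i) * (k.+1 - i.+1)) = 'X^(l.+1 * k.+1) * 'X^(i.+1 * (l + i.+1 - l.+1)) * 'X^(i.+1) :> {poly rat}.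
  rewrite -!exprD; congr 'X^_.
  have [s ->] : exists s, k = (i + s)%N by exists (k - i)%N; lia.
  have [t ->] : exists t, l = (i + t)%N by exists (l - i)%N; lia.
  have -> : ((i + s).+1 - i.+1 = s)%N by lia.
  have -> : (i + t - i = t)%N by lia.
  have -> : (i + t + i.+1 - (i + t).+1 = i)%N by lia.
  nia.
have e2 : 'X^(i.+1 * (k + l.+1) + (l - i) * (k.+1 - i.+1)) = 'X^(l.+1 * k.+1) * 'X^(i.+1 * (l + i.+1 - l.+1)) :> {poly rat}.
  rewrite -!exprD; congr 'X^_.
  have [s ->] : exists s, k = (i + s)%N by exists (k - i)%N; lia.
  have [t ->] : exists t, l = (i + t)%N by exists (l - i)%N; lia.
  have -> : ((i + s).+1 - i.+1 = s)%N by lia.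
  have -> : (i + t - i = t)%N by lia.
  have -> : (i + t + i.+1 - (i + t).+1 = i)%N by lia.
  nia.
rewrite e1 e2; ring.
Qed.

Lemma Arec k l : Apoly k l.+1
  = (1 - 'X^(k + l.+1)) * Apoly k l + 'X^(l.+1 * k.+1) * qbinom (k + l.+1) l.+1.
Proof.
rewrite qbinomE -Vfin.
have A1 : Apoly k l = 1 + \sum_(0 <= i < l.+1) Rr k l i.+1.
  by rewrite ApolyE big_nat_recr //= Rr_last addr0.
have A2 : Apoly k l = \sum_(0 <= i < l.+1) Rr k l i.
  by rewrite ApolyE big_nat_recl // Rr0.
rewrite ApolyE.
have S : \sum_(0 <= i < l.+1) Rr k l.+1 i.+1
   = \sum_(0 <= i < l.+1) Rr k l i.+1 - 'X^(k + l.+1) * \sum_(0 <= i < l.+1) Rr k l i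
     + \sum_(0 <= i < l.+1) (ta k l.+1 i.+1 (l - i) + tw k l.+1 i.+1 (l - i)).
  rewrite mulr_sumr -sumrB -big_split /=.
  apply: eq_big_nat => i /andP [_ Hi].
  by rewrite -L2 //; ring.
rewrite S mulrBl mul1r {1}A1 A2; ring.
Qed.

Definition Sp k l : {poly rat} := \sum_(0 <= j < l.+1)
  'X^(j * k.+1) * gb (k + j) j * \prod_((k + j).+1 <= i < (k + l).+1) (1 - 'X^i).

Lemma Apoly_Sp k l : Apoly k l = Sp k l.
Proof.
elim: l => [|l IH].
  by rewrite ApolyE big_geq // addr0 /Sp big_nat1 mul0n expr0 mul1r addn0 gb0 big_geq // mulr1.
rewrite Arec IH /Sp [in RHS]big_nat_recr //=.
rewrite [X in _ = _ + _ * X]big_geq // mulr1 qbinomE addnS.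
congr (_ + _); rewrite mulr_sumr; apply: eq_big_nat => j /andP [_ Hj].
rewrite [in RHS]big_nat_recr /=; last by lia.
by ring.
Qed.

Definition eqm (d : nat) (p q : {poly rat}) := forall i, (i <= d)%N -> p`_i = q`_i.

Lemma eqm_refl d p : eqm d p p. Proof. by []. Qed.
Lemma eqm_sym d p q : eqm d p q -> eqm d q p. Proof. by move=> H i Hi; rewrite H. Qed.
Lemma eqm_trans d p q r : eqm d p q -> eqm d q r -> eqm d p r.
Proof. by move=> H1 H2 i Hi; rewrite H1 ?H2. Qed.
Lemma eqm_le d d' p q : (d' <= d)%N -> eqm d p q -> eqm d' p q.
Proof. by move=> Hd H i Hi; rewrite H // (leq_trans Hi). Qed.
Lemma eqmD d p1 q1 p2 q2 : eqm d p1 q1 -> eqm d p2 q2 -> eqm d (p1 + p2) (q1 + q2).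
Proof. by move=> H1 H2 i Hi; rewrite !coefD H1 ?H2. Qed.
Lemma eqmM d p1 q1 p2 q2 : eqm d p1 q1 -> eqm d p2 q2 -> eqm d (p1 * p2) (q1 * q2).
Proof.
move=> H1 H2 i Hi; rewrite !coefM; apply: eq_bigr => [[j /= Hj]] _.
rewrite H1 ?H2 //; first by rewrite (leq_trans (leq_subr _ _)).
by rewrite (leq_trans _ Hi) // -ltnS.
Qed.
Lemma eqm_sum d (I : Type) (r : seq I) (P : pred I) (F G : I -> {poly rat}) :
  (forall i, P i -> eqm d (F i) (G i)) ->
  eqm d (\sum_(i <- r | P i) F i) (\sum_(i <- r | P i) G i).
Proof.
move=> H; elim: r => [|x r IH]; first by rewrite !big_nil.
rewrite !big_cons; case: ifP => Px //; exact: eqmD (H x Px) IH.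
Qed.
Lemma eqmX d e p q : eqm (d - e) p q -> eqm d ('X^e * p) ('X^e * q).
Proof.
move=> H i Hi; rewrite !coefXnM; case: ifP => // _.
by rewrite H // leq_sub2r.
Qed.
Lemma eqmX0 d e p : (d < e)%N -> eqm d ('X^e * p) 0.
Proof.
move=> H i Hi; rewrite coefXnM coef0 ifT //.
exact: leq_ltn_trans Hi H.
Qed.
Lemma eqm_prod1 d m n : (d < m)%N ->
  eqm d (\prod_(m <= i < n) (1 - 'X^i)) 1.
Proof.
move=> Hm; rewrite big_seq_cond.
apply: (big_ind (fun p => eqm d p 1)) => //.
  by move=> x y Hx Hy; rewrite -[1](mulr1 1); apply: eqmM.
move=> i /andP [Hi _] j Hj; rewrite mem_index_iota in Hi.
rewrite coefB coef1 coefXn.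
have -> : (j == i) = false by apply/negbTE; rewrite neq_ltn (leq_ltn_trans Hj) // (leq_trans Hm) //; case/andP: Hi.
by rewrite subr0.
Qed.

Lemma qpoch_split s N : (s <= N)%N ->
  qpoch N = qpoch s * \prod_(s.+1 <= i < N.+1) (1 - 'X^i).
Proof. by move=> H; rewrite /qpoch -big_cat_nat. Qed.

Lemma gbinv1 d N r : (r <= N)%N -> (d <= r)%N -> eqm d (gb N r * qpoch (N - r)) 1.
Proof.
move=> H1 H2.
have E : gb N r * qpoch (N - r) = \prod_(r.+1 <= i < N.+1) (1 - 'X^i).
  apply: (@mulIf _ (qpoch r)); first exact: qpoch_neq0.
  by rewrite mulrAC gb_qpoch // (qpoch_split H1) mulrC.
by rewrite E; apply: eqm_prod1.
Qed.

Lemma gbinv2 d N r : (r <= N)%N -> (d <= N - r)%N -> eqm d (gb N r * qpoch r) 1.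
Proof.
move=> H1 H2.
have E : gb N r * qpoch r = \prod_((N - r).+1 <= i < N.+1) (1 - 'X^i).
  apply: (@mulIf _ (qpoch (N - r))); first exact: qpoch_neq0.
  by rewrite gb_qpoch // (qpoch_split (leq_subr r N)) mulrC.
by rewrite E; apply: eqm_prod1.
Qed.

Lemma inv_uniq d a P Q : eqm d (P * qpoch a) 1 -> eqm d (Q * qpoch a) 1 -> eqm d P Q.
Proof.
move=> HP HQ.
apply: (@eqm_trans _ _ (P * (Q * qpoch a))).
  by rewrite -{1}[P]mulr1; apply: eqmM => //; apply: eqm_sym.
rewrite mulrA (mulrC P) -mulrA -{2}[Q]mulr1; apply: eqmM => //.
Qed.

Lemma tuple_sum_cons (T : finType) n (F : n.+1.-tuple T -> {poly rat}) :
  \sum_(t : n.+1.-tuple T) F t = \sum_(x : T) \sum_(t : n.-tuple T) F [tuple of x :: t].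
Proof.
rewrite pair_big /=.
rewrite (reindex (fun p : T * n.-tuple T => [tuple of p.1 :: p.2])) //=.
exists (fun t : n.+1.-tuple T => (thead t, [tuple of behead t])).
  by move=> [x t] _ /=; congr (_, _); apply: val_inj.
by move=> t _; apply: val_inj => /=; rewrite [in RHS](tuple_eta t).
Qed.

Lemma tuple0_sum (T : finType) (F : 0.-tuple T -> {poly rat}) :
  \sum_(t : 0.-tuple T) F t = F [tuple].
Proof.
rewrite (big_pred1 [tuple]) // => t; apply/esym/eqP; exact: tuple0.
Qed.

Definition condH (l k top : nat) (s : seq nat) : bool :=
  sorted geq s && all (fun x => x <= top)%N s && all (fun x => x <= l)%N (drop k s).

Definition Hkp (l B k len top : nat) : {poly rat} :=
  \sum_(t : len.-tuple 'I_B | condH l k top (map val t)) 'X^(sumn (map val t)).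

Lemma sorted_cons (x : nat) s :
  sorted geq (x :: s) = all (fun y => y <= x)%N s && sorted geq s.
Proof.
rewrite /= path_sortedE //.
by move=> a b c /= H1 H2; exact: leq_trans H2 H1.
Qed.

Lemma condH_cons l k top x s :
  condH l k.+1 top (x :: s) = (x <= top)%N && condH l k x s.
Proof.
rewrite /condH sorted_cons /=.
case Hx: (x <= top)%N; rewrite ?andbF //=.
case A: (all (fun y => y <= x)%N s); rewrite ?andbF //=.
have -> : all (fun y => y <= top)%N s.
  by apply: sub_all A => y Hy; exact: leq_trans Hy Hx.
by rewrite andbT.
Qed.

Lemma condH0_cons l top x s :
  condH l 0 top (x :: s) = (x <= minn l top)%N && condH l 0 x s.
Proof.
rewrite /condH !drop0 sorted_cons /= leq_min.
case Hx: (x <= top)%N; case Hl: (x <= l)%N; rewrite ?andbF ?andbT //=.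
  case A: (all (fun y => y <= x)%N s); rewrite ?andbF //=.
  have -> : all (fun y => y <= top)%N s.
    by apply: sub_all A => y Hy; exact: leq_trans Hy Hx.
  have -> : all (fun y => y <= l)%N s.
    by apply: sub_all A => y Hy; exact: leq_trans Hy Hl.
  by rewrite andbT.
Qed.

Lemma Hkp_len0 l B k top : Hkp l B k 0 top = 1.
Proof. by rewrite /Hkp big_mkcond tuple0_sum /= /condH /=; case: k. Qed.

Lemma HkpS_gen l B k k' len top (Q : nat -> bool) :
  (forall x s, condH l k top (x :: s) = Q x && condH l k' x s) ->
  Hkp l B k len.+1 top = \sum_(x : 'I_B | Q x) 'X^x * Hkp l B k' len x.
Proof.
move=> HQ; rewrite /Hkp big_mkcond tuple_sum_cons [RHS]big_mkcond.
apply: eq_bigr => x _ /=.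
case Qx: (Q x).
  rewrite mulr_sumr [RHS]big_mkcond; apply: eq_bigr => t _.
  by rewrite HQ Qx /=; case: ifP => _; rewrite ?mulr0 // exprD.
by rewrite big1 // => t _; rewrite HQ Qx.
Qed.

Lemma sum_ord_le B m (F : nat -> {poly rat}) : (m < B)%N ->
  \sum_(x : 'I_B | (x <= m)%N) F x = \sum_(0 <= x < m.+1) F x.
Proof.
move=> HB; rewrite -(big_mkord (fun x => x <= m)%N F) (big_nat_widen _ _ _ _ _ HB).
by apply: eq_bigl => x; rewrite ltnS.
Qed.

Lemma HkpS l B k len top : (top < B)%N ->
  Hkp l B k.+1 len.+1 top = \sum_(0 <= x < top.+1) 'X^x * Hkp l B k len x.
Proof.
move=> HB; rewrite (@HkpS_gen l B k.+1 k len top (fun x => x <= top)%N).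
  by rewrite (sum_ord_le (fun x => 'X^x * Hkp l B k len x) HB).
by move=> x s; rewrite condH_cons.
Qed.

Lemma Hkp0S l B len top : (minn l top < B)%N ->
  Hkp l B 0 len.+1 top = \sum_(0 <= x < (minn l top).+1) 'X^x * Hkp l B 0 len x.
Proof.
move=> HB; rewrite (@HkpS_gen l B 0 0 len top (fun x => x <= minn l top)%N).
  by rewrite (sum_ord_le (fun x => 'X^x * Hkp l B 0 len x) HB).
by move=> x s; rewrite condH0_cons.
Qed.

Lemma hockey L T : \sum_(0 <= x < T.+1) 'X^x * gb (L + x) x = gb (L.+1 + T) T.
Proof.
elim: T => [|T IH]; first by rewrite big_nat1 !gb0 mulr1.
rewrite big_nat_recr //= IH addnS gbS; congr (_ + _).
Qed.

Lemma Hkp0 l B len top : (top < B)%N ->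
  Hkp l B 0 len top = gb (len + minn l top) (minn l top).
Proof.
elim: len top => [|len IH] top HB; first by rewrite Hkp_len0 gbNN.
have Hm : (minn l top < B)%N by rewrite (leq_ltn_trans (geq_minr _ _)).
rewrite Hkp0S // -hockey; apply: eq_big_nat => x /andP [_ Hx].
rewrite IH; last by rewrite (leq_ltn_trans _ HB) // (leq_trans _ (geq_minr l top)) // -ltnS.
have -> : minn l x = x by apply/minn_idPr; rewrite (leq_trans _ (geq_minl l top)) // -ltnS.
by [].
Qed.

Definition CF l k len top : {poly rat} :=
  if (len <= k)%N then gb (len + top) top else
  \sum_(0 <= j < (minn l top).+1)
     'X^(j * k.+1) * gb (k + (top - j)) (top - j) * gb (len - k.+1 + j) j.

Lemma sum_min l x (F : nat -> {poly rat}) :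
  \sum_(0 <= j < (minn l x).+1) F j = \sum_(0 <= j < x.+1 | (j <= l)%N) F j.
Proof.
case: (leqP l x) => H.
  rewrite (big_nat_widen _ _ _ _ _ (H : l.+1 <= x.+1)%N).
  by apply: eq_bigl => j; rewrite ltnS.
rewrite [RHS]big_mkcond; apply: eq_big_nat => j /andP [_ Hj].
by rewrite ifT // (leq_trans _ (ltnW H)) // -ltnS.
Qed.

Lemma Hkp_CF l B k len top : (top < B)%N -> Hkp l B k len top = CF l k len top.
Proof.
elim: k len top => [|k IH] [|len] top HB.
- by rewrite Hkp_len0 /CF /= add0n gbNN.
  rewrite Hkp0 // /CF (_ : (len.+1 <= 0)%N = false) // -hockey; apply: eq_big_nat => j /andP [_ Hj].
  rewrite muln1 add0n gbNN mulr1. have -> : (len.+1 - 1 + j = len + j)%N by lia. by [].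
- by rewrite Hkp_len0 /CF /= add0n gbNN.
rewrite HkpS //.
have IH' : forall x, (x < top.+1)%N -> Hkp l B k len x = CF l k len x.
  by move=> x Hx; apply: IH; exact: leq_trans Hx HB.
under eq_big_nat => x Hx do rewrite IH' ?(andP Hx).2 //.
rewrite /CF ltnS; case: (leqP len k) => Hlk.
  by rewrite -hockey.
pose G x j := 'X^x * ('X^(j * k.+1) * gb (k + (x - j)) (x - j) * gb (len - k.+1 + j) j).
transitivity (\sum_(0 <= x < top.+1) \sum_(0 <= j < top.+1)
                 (if (j <= l)%N && (j <= x)%N then G x j else 0)).
  apply: eq_big_nat => x /andP [_ Hx].
  rewrite sum_min mulr_sumr (big_nat_widen _ _ _ _ _ Hx) big_mkcond.
  apply: eq_big_nat => j _; rewrite ltnS.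
  by case: ifP.
rewrite exchange_big_nat sum_min [RHS]big_mkcond.
apply: eq_big_nat => j /andP [_ Hj].
case: ifP => Hjl; last by rewrite big1 // => x _; rewrite Hjl.
have E : \sum_(0 <= i < top.+1) (if true && (j <= i)%N then G i j else 0)
    = \sum_(j <= i < top.+1) G i j.
  rewrite (@big_cat_nat _ _ _ j 0 top.+1 _ _ (leq0n j) (ltnW Hj)).
  rewrite big1_seq /=; last first.
    by move=> x; rewrite mem_index_iota => /andP [_ Hx]; rewrite leqNgt Hx.
  rewrite add0r; apply: eq_big_nat => x /andP [Hx _]; by rewrite Hx.
rewrite E.
rewrite -{1}[j]add0n big_addn.
have -> : (top.+1 - j = (top - j).+1)%N by lia.
rewrite -(hockey k (top - j)) mulr_sumr mulr_suml.
apply: eq_big_nat => y _.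
rewrite /G addnK.
have -> : (len.+1 - k.+2 + j = len - k.+1 + j)%N by [].
have e : 'X^(y + j) * 'X^(j * k.+1) = 'X^(j * k.+2) * 'X^y :> {poly rat}.
  by rewrite -!exprD; congr 'X^_; lia.
transitivity (('X^(y + j) * 'X^(j * k.+1)) * gb (k + y) y * gb (len - k.+1 + j) j); first ring.
rewrite e; ring.
Qed.

Lemma in_hookE k l m (t : m.-tuple 'I_m.+1) :
  in_hook k l t = condH l k m (map val t) && (sumn (map val t) == m).
Proof.
rewrite /in_hook /condH /parts_of.
have -> : all (fun x => x <= m)%N [seq val i | i <- t].
  by apply/allP => x /mapP [i _ ->]; rewrite -ltnS ltn_ord.
by rewrite andbT; case: (sorted _ _); case: (sumn _ == m); case: (all _ _).
Qed.

Lemma H_card_coef k l m : (H_card k l m)%:R = (Hkp l m.+1 k m m)`_m :> rat.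
Proof.
rewrite /H_card /Hkp coef_sum -sum1_card natr_sum big_mkcond [RHS]big_mkcond /=.
apply: eq_bigr => t _; rewrite inE in_hookE coefXn eq_sym.
by case: (condH _ _ _ _); case: (m == _).
Qed.

Definition Ib n a : {poly rat} := gb (a + n) n.
Definition Rs n k l : {poly rat} :=
  \sum_(0 <= j < l.+1) 'X^(j * k.+1) * (Ib n k * Ib n j).

Lemma Ib_inv n a d : (d <= n)%N -> eqm d (Ib n a * qpoch a) 1.
Proof.
move=> H; have := @gbinv1 d (a + n) n (leq_addl _ _) H.
by rewrite addnK.
Qed.

Lemma Ib0 n : Ib n 0 = 1.
Proof. by rewrite /Ib add0n gbNN. Qed.

Lemma eqm_sum_nat d m p (F G : nat -> {poly rat}) :
  (forall j, (m <= j < p)%N -> eqm d (F j) (G j)) ->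
  eqm d (\sum_(m <= j < p) F j) (\sum_(m <= j < p) G j).
Proof.
move=> H; rewrite !big_seq; apply: eqm_sum => j; rewrite mem_index_iota; exact: H.
Qed.

Lemma eqm0_sum d m p (F : nat -> {poly rat}) :
  (forall j, (m <= j < p)%N -> eqm d (F j) 0) -> eqm d (\sum_(m <= j < p) F j) 0.
Proof.
move=> H; apply: (@eqm_trans _ _ (\sum_(m <= j < p) (0 : {poly rat}))).
  exact: eqm_sum_nat.
by rewrite big1.
Qed.

Lemma CF_Rs n k l i : (i <= n)%N -> eqm i (CF l k i i) (Rs n k l).
Proof.
move=> Hin; rewrite /CF /Rs; case: (leqP i k) => Hik.
  rewrite big_nat_recl // mul0n expr0 mul1r Ib0 mulr1.
  apply: (@eqm_trans _ _ (Ib n k + 0)); last first.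
    apply: eqmD => //; apply: eqm_sym; apply: eqm0_sum => j _.
    apply: eqmX0; rewrite mulSn; lia.
  rewrite addr0; apply: (@inv_uniq _ k); last by apply: Ib_inv.
  rewrite (qpoch_split Hik) mulrA.
  have H1 : eqm i (gb (i + i) i * qpoch i) 1.
    by have := @gbinv1 i (i + i) i (leq_addl _ _) (leqnn i); rewrite addnK.
  have H2 := @eqm_prod1 i i.+1 k.+1 (ltnSn i).
  by have := eqmM H1 H2; rewrite mulr1.
rewrite minnC sum_min big_mkcond.
apply: eqm_sum_nat => j /andP [_ Hjl].
case: ifP => Hji; last first.
  apply: eqm_sym; apply: eqmX0; rewrite mulnS; move/negbT: Hji; rewrite -ltnNge; lia.
case: (ltnP i (j * k.+1)) => Hjk.
  apply: (@eqm_trans _ _ 0); first by rewrite -mulrA; apply: eqmX0.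
  by apply: eqm_sym; apply: eqmX0.
rewrite -mulrA; apply: eqmX.
have Hd : (i - j * k.+1 <= n)%N by rewrite (leq_trans (leq_subr _ _)).
apply: eqmM.
  apply: (@inv_uniq _ k); last exact: Ib_inv.
  have := @gbinv1 (i - j * k.+1) (k + (i - j)) (i - j) (leq_addl _ _).
  rewrite addnK; apply; rewrite leq_sub2l //; rewrite mulnS; lia.
case: j Hjl Hji Hjk Hd => [|j] Hjl Hji Hjk Hd; first by rewrite gb0 Ib0.
apply: (@inv_uniq _ j.+1); last exact: Ib_inv.
apply: gbinv2; first by lia.
have -> : (i - k.+1 + j.+1 - j.+1 = i - k.+1)%N by lia.
rewrite mulSn; lia.
Qed.

Lemma Rs_Sp n k l : eqm n (Rs n k l * qpoch (k + l)) (Sp k l).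
Proof.
rewrite /Rs /Sp mulr_suml; apply: eqm_sum_nat => j /andP [_ Hj].
rewrite ltnS in Hj.
have E : 'X^(j * k.+1) * (Ib n k * Ib n j) * qpoch (k + l)
  = 'X^(j * k.+1) * ((Ib n k * qpoch k) * (Ib n j * qpoch j))
     * (gb (k + j) j * \prod_((k + j).+1 <= i < (k + l).+1) (1 - 'X^i)).
  rewrite (@qpoch_split (k + j) (k + l)); last by rewrite leq_add2l.
  rewrite -(@gb_qpoch (k + j) j (leq_addl _ _)) addnK; ring.
rewrite E.
have -> : 'X^(j * k.+1) * gb (k + j) j * \prod_((k + j).+1 <= i < (k + l).+1) (1 - 'X^i)
  = 'X^(j * k.+1) * (1 * 1) * (gb (k + j) j * \prod_((k + j).+1 <= i < (k + l).+1) (1 - 'X^i)).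
  by ring.
apply: eqmM => //; apply: eqmM => //; apply: eqmM; exact: Ib_inv.
Qed.

Lemma G_Rs k l n : eqm n (G_trunc k l n) (Rs n k l).
Proof.
move=> i Hi.
have -> : (G_trunc k l n)`_i = (H_card k l i)%:R.
  rewrite /G_trunc coef_sum (@big_cat_nat _ _ _ i 0 n.+1 _ _ (leq0n i) (leqW Hi)) /=.
  rewrite big_nat_recl //.
  rewrite [X in X + _]big1_seq; last first.
    move=> x /andP [_]; rewrite mem_index_iota => /andP [_ Hx].
    rewrite coefZ coefXn.
    have -> : (i == x) = false by apply/negbTE; rewrite neq_ltn Hx orbT.
    by rewrite mulr0.
  rewrite [X in _ + (_ + X)]big1_seq; last first.
    move=> x /andP [_]; rewrite mem_index_iota => /andP [Hx _].
    rewrite coefZ coefXn.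
    have -> : (i == x.+1) = false by apply/negbTE; rewrite neq_ltn ltnS Hx.
    by rewrite mulr0.
  by rewrite coefZ coefXn eqxx mulr1 add0r addr0.
rewrite H_card_coef Hkp_CF //; exact: CF_Rs.
Qed.

Unset Implicit Arguments.

Theorem theorem3 (k l n : nat) :
  (G_trunc k l n * \prod_(1 <= i < (k + l).+1) (1 - 'X^i)) `_ n = (Apoly k l) `_ n.
Proof.
have := eqmM (@G_Rs k l n) (@eqm_refl n (qpoch (k + l))).
move=> H; rewrite [LHS](H n (leqnn n)).
by rewrite Apoly_Sp; apply: Rs_Sp.
Qed.
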